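(* Let $G$ be a finite simple connected graph and let $S\subseteq V(G)$ with $|S|=k\geq 2$. Then $\kappa_k^*(G)\leq \kappa_k^*(G[S])+(|V(G)|-k)$.
   Context: $G[S]$ is the subgraph of $G$ induced by $S$. For $S\subseteq V(H)$ with $|S|\ge 2$, an $S$-Steiner tree of a graph $H$ is a subtree $T$ of $H$ with $S\subseteq V(T)$ all of whose leaves belong to $S$. A family of $S$-Steiner trees $T_1,\dots,T_k$ is completely independent if for all $1\le p<q\le k$: $E(T_p)\cap E(T_q)=\emptyset$, $V(T_p)\cap V(T_q)=S$, and for any two vertices $x_1,x_2\in S$ the $(x_1,x_2)$-paths in $T_p$ and in $T_q$ are internally disjoint. $\kappa^*_H(S)$ is the maximum number of trees in a completely independent family of $S$-Steiner trees in $H$, and $\kappa_k^*(H)=\min\{\kappa^*_H(S): S\subseteq V(H),\ |S|=k\}$. *)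

(* Defs.v *)
From mathcomp Require Import all_boot.
From Stdlib Require Import ClassicalDescription.
Set Implicit Arguments. Unset Strict Implicit. Unset Printing Implicit Defensive.

(* A graph H is given by a vertex set V : {set T} over a finite type T and an
   adjacency relation e : rel T (symmetric, irreflexive); only edges between
   vertices of V count.  The induced subgraph G[S] of G = (setT, e) is (S, e). *)

Definition pbool (P : Prop) : bool :=
  if excluded_middle_informative P then true else false.

Section Steiner.
Variable T : finType.

(* A candidate subgraph: a vertex set and a set of edges (2-element sets). *)
Definition sgraph := ({set T} * {set {set T}})%type.

Definition tadj (Tr : sgraph) (x y : T) : bool := [set x; y] \in Tr.2.

Definition is_subgraph (V : {set T}) (e : rel T) (Tr : sgraph) : Prop :=
  Tr.1 \subset V /\
  forall E, E \in Tr.2 ->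
    exists x y, [/\ E = [set x; y], x != y, x \in Tr.1, y \in Tr.1 & e x y].

Definition tpath (Tr : sgraph) (x y : T) (p : seq T) : Prop :=
  [/\ uniq (x :: p), path (tadj Tr) x p & last x p = y].

Definition tconnected (Tr : sgraph) : Prop :=
  forall x y, x \in Tr.1 -> y \in Tr.1 -> exists p, tpath Tr x y p.

Definition tacyclic (Tr : sgraph) : Prop :=
  ~ exists x p, [/\ uniq (x :: p), 2 <= size p, path (tadj Tr) x p
                  & tadj Tr (last x p) x].

Definition is_tree (Tr : sgraph) : Prop :=
  Tr.1 != set0 /\ tconnected Tr /\ tacyclic Tr.

Definition is_leaf (Tr : sgraph) (x : T) : bool :=
  (x \in Tr.1) && (#|[set y | tadj Tr x y]| == 1).

Definition steiner_tree (V : {set T}) (e : rel T) (S : {set T}) (Tr : sgraph)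
  : Prop :=
  is_subgraph V e Tr /\ is_tree Tr /\ S \subset Tr.1 /\
  (forall x, is_leaf Tr x -> x \in S).

Definition internal (x y : T) (p : seq T) (z : T) : bool := (z \in p) && (z != y).

Definition compl_indep (S : {set T}) (T1 T2 : sgraph) : Prop :=
  [disjoint T1.2 & T2.2] /\ T1.1 :&: T2.1 = S /\
  forall x1 x2, x1 \in S -> x2 \in S ->
    forall p q, tpath T1 x1 x2 p -> tpath T2 x1 x2 q ->
      forall z, internal x1 x2 p z -> ~~ internal x1 x2 q z.

Definition has_ci_family (V : {set T}) (e : rel T) (S : {set T}) (n : nat)
  : Prop :=
  exists F : 'I_n -> sgraph,
    (forall i, steiner_tree V e S (F i)) /\
    (forall i j, i != j -> compl_indep S (F i) (F j)).

(* kappa*_H(S): the maximum such n.  For #|S| >= 2 every tree has an edge and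
   the trees are edge-disjoint, so n <= #|T|^2 and the bound is harmless. *)
Definition kappaS (V : {set T}) (e : rel T) (S : {set T}) : nat :=
  \max_(n < (#|T| ^ 2).+1 | pbool (has_ci_family V e S n)) n.

Definition kappa_k (V : {set T}) (e : rel T) (k : nat) : nat :=
  \big[minn/(#|T| ^ 2).+1]_(S : {set T} | (S \subset V) && (#|S| == k))
     kappaS V e S.

End Steiner.

(* Main.v *)
Require Import Defs.
From mathcomp Require Import all_boot.
From Stdlib Require Import ClassicalDescription.

Lemma pboolP (P : Prop) : reflect P (pbool P).
Proof. rewrite /pbool; case: excluded_middle_informative => h; by constructor. Qed.

Lemma core (T : finType) (e : rel T) (S : {set T}) (x0 : T) (n : nat) :
  has_ci_family [set: T] e S n ->
  exists m, [/\ m <= n, has_ci_family S e S m & n <= m + (#|T| - #|S|)].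
Proof.
case=> F [HF HI].
set good := [set i | (F i).1 \subset S].
exists #|good|; split.
- by rewrite -[n in _ <= n]card_ord max_card.
- exists (fun j => F (enum_val j)); split.
  + move=> j; have := enum_valP j; rewrite inE => sub.
    have [[_ He] [Ht [HS Hl]]] := HF (enum_val j).
    by split; [split|].
  + by move=> j j' ne; apply: HI; rewrite (inj_eq enum_val_inj).
- set f := fun i => odflt x0 [pick x in (F i).1 :\: S].
  have fP : forall i, i \in ~: good -> f i \in (F i).1 :\: S.
    move=> i; rewrite !inE => /subsetPn [x xi xS]; rewrite /f.
    case: pickP => [y|h] /=; first by rewrite !inE. by move: (h x); rewrite !inE xS xi.
  have inj : {in ~: good &, injective f}.
    move=> i j ib jb fij; apply/eqP; apply/negPn/negP => ne.
    have [_ [HS _]] := HI i j ne.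
    have := fP i ib; have := fP j jb; rewrite -fij !inE => /andP[_ xj] /andP[xS xi].
    by move: xS; rewrite -HS inE xi xj.
  have : #|~: good| <= #|T| - #|S|.
    have -> : #|T| - #|S| = #|~: S| by rewrite [in RHS]cardsCs setCK.
    rewrite -(card_in_imset inj); apply: subset_leq_card.
    apply/subsetP => y /imsetP [i ib ->]; have := fP i ib.
    by rewrite !inE => /andP[].
  move=> h; rewrite -{1}(card_ord n) -(cardsC good) leq_add2l; exact: h.
Qed.

Lemma bigmin_le (I : eqType) (r : seq I) (P : pred I) (F : I -> nat) b i0 :
  i0 \in r -> P i0 -> \big[minn/b]_(i <- r | P i) F i <= F i0.
Proof.
elim: r => // a r IH; rewrite inE big_cons => /orP [/eqP <- ->|/IH h /h].
  exact: geq_minl.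
by case: (P a) => // h'; apply: leq_trans h'; exact: geq_minr.
Qed.

Theorem theorem2p4 (T : finType) (e : rel T)
  (e_sym : symmetric e) (e_irr : irreflexive e)
  (G_conn : forall x y : T, connect e x y)
  (S : {set T}) (hS : 2 <= #|S|) :
  kappa_k [set: T] e #|S| <= kappa_k S e #|S| + (#|T| - #|S|).
Proof.
have [x0 _] : {x0 : T | x0 \in S}.
  by case: (pickP (mem S)) => [x ?|/eq_card0 h]; [exists x | rewrite h in hS].
have h1 : kappa_k [set: T] e #|S| <= kappaS [set: T] e S.
  rewrite /kappa_k; apply: bigmin_le; first by rewrite mem_index_enum.
  by rewrite subsetT eqxx.
have h2 : kappaS S e S <= kappa_k S e #|S|.
  rewrite /kappa_k; apply: (big_ind (fun y => kappaS S e S <= y)).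
  - rewrite /kappaS; apply/bigmax_leqP => i _; exact: ltnW (ltn_ord i).
  - by move=> a b ha hb; rewrite leq_min ha hb.
  - move=> S' /andP[sub /eqP c].
    have -> // : S' = S by apply/eqP; rewrite eqEcard sub c leqnn.
apply: leq_trans h1 (leq_trans _ (leq_add h2 (leqnn _))).
rewrite {1}/kappaS; apply/bigmax_leqP => i /pboolP Hi.
have [m [lemn Hm hn]] := @core _ _ _ x0 _ Hi.
apply: leq_trans hn _; rewrite leq_add2r.
have lm : m < (#|T| ^ 2).+1 by apply: leq_ltn_trans lemn (ltn_ord i).
rewrite /kappaS; apply: (@leq_bigmax_cond _ _ (fun j : 'I__ => nat_of_ord j) (Ordinal lm)).
by apply/pboolP.
Qed.
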